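(* Let $\mathfrak a\subset K$ be a fractional $A_{\infty_1}$-ideal having an $\mathbb F_q$-basis $(\alpha_0=1,\alpha_1,\alpha_2,\dots)$ with $1<|\alpha_1|<|\alpha_2|<\cdots$, and let $\Omega_i^{\mathfrak a}(m)=\sum_{(c_0,\dots,c_{i-1})\in\mathbb F_q^i}(c_0+c_1\alpha_1+\dots+c_{i-1}\alpha_{i-1}+\alpha_i)^{-m}$. Put $\hat\zeta^{\mathfrak a}(m)=\sum_{i\ge1}\Omega_i^{\mathfrak a}(m)$. Then for all $n\in\mathbb N$, $n\ge1$, \[|\hat\zeta^{\mathfrak a}(q^n-1)|=|\Omega_1^{\mathfrak a}(q^n-1)|=|\alpha_1|^{q^n(1-q)}<1.\]
   Context: Let $q$ be a prime power, $k=\mathbb F_q(T)$, $A=\mathbb F_q[T]$, $k_\infty=\mathbb F_q((1/T))$ with $|x|=q^{\deg_T x}$. Let $f\in k_\infty\setminus k$ be a root of $X^2-aX-b$ with $a\in A$ monic, $d=\deg_T a\ge1$, $b\in\mathbb F_q^*$, $|f|=q^d$; $K=k(f)\subset k_\infty$ and $A_{\infty_1}=\mathbb F_q[f,fT,\dots,fT^{d-1}]$ is the ring of elements of $K$ regular away from the place induced by $K\subset k_\infty$. (In the paper's normalization, where the $\alpha_i$ are quotients of monic elements, $\hat\zeta^{\mathfrak a}(m)$ equals the zeta sum over monic elements of $\mathfrak a$ minus $1$.) *)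

(* Defs.v *)
From HB Require Import structures.
From mathcomp Require Import all_boot all_order all_algebra.
From Stdlib Require Import ClassicalEpsilon.
Set Implicit Arguments. Unset Strict Implicit. Unset Printing Implicit Defensive.
Import Order.TTheory GRing.Theory Num.Theory.
Local Open Scope ring_scope.

Section Laurent.
Variable F : finFieldType.

Definition qF : nat := #|F|.

(* A Laurent series in t = 1/T is represented by a pair (v, s) meaning
   t^v * (s 0 + s 1 t + s 2 t^2 + ...).  Two representations denote the
   same element of k_oo iff they have the same coefficients ([eqLS]). *)
Definition LS := (int * (nat -> F))%type.

(* coefficient of t^n (i.e. of T^(-n)) *)
Definition coef (x : LS) (n : int) : F :=
  match (n - x.1)%R with Posz k => x.2 k | Negz _ => 0 end.

Definition eqLS (x y : LS) : Prop := forall n, coef x n = coef y n.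

Definition constLS (c : F) : LS := (0, fun k => if k == 0%N then c else 0).
Definition zeroLS : LS := constLS 0.
Definition oneLS : LS := constLS 1.

Definition addLS (x y : LS) : LS :=
  let v := Num.min x.1 y.1 in (v, fun k => coef x (v + k%:Z) + coef y (v + k%:Z)).
Definition oppLS (x : LS) : LS := (x.1, fun k => - x.2 k).
Definition mulLS (x y : LS) : LS :=
  (x.1 + y.1, fun k => \sum_(j < k.+1) x.2 j * y.2 (k - j)%N).
Definition powLS (x : LS) (m : nat) : LS := iter m (mulLS x) oneLS.

(* coefficients of the inverse of a unit power series u (u 0 <> 0) *)
Fixpoint invl (u : nat -> F) (k : nat) : seq F :=
  match k with
  | 0 => [:: (u 0%N)^-1]
  | k'.+1 => let l := invl u k' in
      rcons l (- (u 0%N)^-1 * \sum_(j < k'.+1) u j.+1 * nth 0 l (k' - j)%N)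
  end.

(* multiplicative inverse in k_oo (inverse of 0 is 0) *)
Definition invLS (x : LS) : LS :=
  match excluded_middle_informative (exists k, x.2 k != 0) with
  | left h => let k0 := ex_minn h in
              let u := fun j => x.2 (k0 + j)%N in
              (- (x.1 + k0%:Z), fun k => nth 0 (invl u k) k)
  | right _ => zeroLS
  end.

(* |x| = q^(deg_T x) = q^(-(least n with coef x n <> 0)), |0| = 0 *)
Definition absLS (x : LS) : rat :=
  match excluded_middle_informative (exists k, x.2 k != 0) with
  | left h => (qF%:Q) ^ (- (x.1 + (ex_minn h)%:Z))
  | right _ => 0
  end.

(* embedding of A = F[T] into k_oo, T = t^(-1) *)
Definition polyLS (p : {poly F}) : LS :=
  (- (size p)%:Z, fun k => if (k <= size p)%N then p`_(size p - k) else 0).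

Definition ratLS (P R : {poly F}) : LS := mulLS (polyLS P) (invLS (polyLS R)).

Definition in_k (x : LS) : Prop :=
  exists P R : {poly F}, R != 0 /\ eqLS x (ratLS P R).

Definition in_K (f x : LS) : Prop :=
  exists P Q R : {poly F}, R != 0 /\
    eqLS x (mulLS (addLS (polyLS P) (mulLS (polyLS Q) f)) (invLS (polyLS R))).

Inductive in_Ainf (d : nat) (f : LS) : LS -> Prop :=
  | Ainf_const c : in_Ainf d f (constLS c)
  | Ainf_gen i : (i < d)%N -> in_Ainf d f (mulLS f (polyLS 'X^i))
  | Ainf_add x y : in_Ainf d f x -> in_Ainf d f y -> in_Ainf d f (addLS x y)
  | Ainf_mul x y : in_Ainf d f x -> in_Ainf d f y -> in_Ainf d f (mulLS x y)
  | Ainf_eq x y : eqLS x y -> in_Ainf d f x -> in_Ainf d f y.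

(* fractional A_{oo_1}-ideal contained in K (a set of elements of k_oo,
   given as a predicate invariant under equality of series) *)
Definition frac_ideal (d : nat) (f : LS) (I : LS -> Prop) : Prop :=
  [/\ (forall x y, eqLS x y -> I x -> I y),
      (forall x, I x -> in_K f x),
      (I zeroLS /\
      (forall x y, I x -> I y -> I (addLS x y)) /\
      (forall r x, in_Ainf d f r -> I x -> I (mulLS r x))),
      (exists x, I x /\ ~ eqLS x zeroLS) &
      (exists2 e, in_Ainf d f e /\ ~ eqLS e zeroLS &
                 forall x, I x -> in_Ainf d f (mulLS e x))].

Definition lincomb (n : nat) (c : {ffun 'I_n -> F}) (alpha : nat -> LS) : LS :=
  \big[addLS/zeroLS]_(j < n) mulLS (constLS (c j)) (alpha j).

Definition Fq_basis (I : LS -> Prop) (alpha : nat -> LS) : Prop :=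
  [/\ forall i, I (alpha i),
      forall n (c : {ffun 'I_n -> F}),
        eqLS (lincomb c alpha) zeroLS -> forall j, c j = 0 &
      forall x, I x -> exists n (c : {ffun 'I_n -> F}), eqLS x (lincomb c alpha)].

Definition Omega (alpha : nat -> LS) (i m : nat) : LS :=
  \big[addLS/zeroLS]_(c : {ffun 'I_i -> F})
     powLS (invLS (addLS (lincomb c alpha) (alpha i))) m.

Definition series_to (w : nat -> LS) (z : LS) : Prop :=
  forall e : int, exists N, forall M, (N <= M)%N -> forall n : int, n <= e ->
    coef (\big[addLS/zeroLS]_(1 <= i < M.+1) w i) n = coef z n.

End Laurent.

(* Main.v *)
From HB Require Import structures.
Require Import Defs.
From mathcomp Require Import all_boot all_order all_algebra all_fingroup all_solvable all_field.
From mathcomp Require Import boolp zify ring.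
From Stdlib Require Import ClassicalEpsilon.
Import Order.TTheory GRing.Theory Num.Theory.
Set Implicit Arguments. Unset Strict Implicit. Unset Printing Implicit Defensive.
Local Open Scope ring_scope.

Section PS.
Variable F : finFieldType.

Definition ps := nat -> F.
HB.instance Definition _ := Choice.copy ps (nat -> F).

Definition psadd (s u : ps) : ps := fun k => s k + u k.
Definition psopp (s : ps) : ps := fun k => - s k.
Definition pszero : ps := fun _ => 0.
Definition psmul (s u : ps) : ps := fun k => \sum_(j < k.+1) s j * u (k - j)%N.
Definition psone : ps := fun k => if k == 0%N then 1 else 0.

Lemma psaddA : associative psadd.
Proof. by move=> x y z; apply/funext=> k; rewrite /psadd addrA. Qed.
Lemma psaddC : commutative psadd.
Proof. by move=> x y; apply/funext=> k; rewrite /psadd addrC. Qed.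
Lemma psadd0 : left_id pszero psadd.
Proof. by move=> x; apply/funext=> k; rewrite /psadd /pszero add0r. Qed.
Lemma psaddN : left_inverse pszero psopp psadd.
Proof. by move=> x; apply/funext=> k; rewrite /psadd /psopp addNr. Qed.
HB.instance Definition _ := GRing.isZmodule.Build ps psaddA psaddC psadd0 psaddN.

Definition trunc N (s : ps) : {poly F} := \poly_(i < N) s i.

Lemma psmul_trunc N s u k : (k < N)%N -> psmul s u k = (trunc N s * trunc N u)`_k.
Proof.
move=> kN; rewrite coefM /psmul; apply: eq_bigr => j _.
have jk : (j <= k)%N by rewrite -ltnS.
rewrite !coef_poly (leq_ltn_trans jk kN) (leq_ltn_trans (leq_subr _ _) kN) //.
Qed.

Lemma psmulA : associative psmul.
Proof.
move=> x y z; apply/funext=> k.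
set N := k.+1.
have L1 : psmul x (psmul y z) k = (trunc N x * (trunc N y * trunc N z))`_k.
  rewrite (psmul_trunc _ _ (ltnSn k)) !coefM; apply: eq_bigr=> j _.
  have jk' : (k - j < N)%N by rewrite ltnS leq_subr.
  by rewrite !coef_poly ltn_ord jk' (psmul_trunc _ _ jk').
have L2 : psmul (psmul x y) z k = ((trunc N x * trunc N y) * trunc N z)`_k.
  rewrite (psmul_trunc _ _ (ltnSn k)) !coefM; apply: eq_bigr=> j _.
  have jk : (j < N)%N by rewrite ltnS -ltnS.
  by rewrite !coef_poly jk (psmul_trunc _ _ jk) (leq_ltn_trans (leq_subr _ _) (ltnSn k)).
by rewrite L1 L2 mulrA.
Qed.

Lemma psmulC : commutative psmul.
Proof.
move=> x y; apply/funext=> k.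
by rewrite !(psmul_trunc _ _ (ltnSn k)) mulrC.
Qed.

Lemma psmul1 : left_id psone psmul.
Proof.
move=> x; apply/funext=> k; rewrite /psmul big_ord_recl /= subn0 mul1r.
by rewrite big1 ?addr0 // => i _; rewrite /psone /= mul0r.
Qed.

Lemma psmulDl : left_distributive psmul psadd.
Proof.
move=> x y z; apply/funext=> k; rewrite /psmul /psadd -big_split /=.
by apply: eq_bigr => i _; rewrite mulrDl.
Qed.

Lemma psone_neq0 : psone != pszero.
Proof.
apply/eqP => h; have := congr1 (fun f => f 0%N) h; rewrite /psone /pszero /=.
by move/eqP; rewrite oner_eq0.
Qed.

HB.instance Definition _ := GRing.Zmodule_isComNzRing.Build ps psmulA psmulC psmul1 psmulDl psone_neq0.

Lemma psaddE (s u : ps) k : (s + u) k = s k + u k. Proof. by []. Qed.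
Lemma psoppE (s : ps) k : (- s) k = - s k. Proof. by []. Qed.
Lemma ps0E k : (0 : ps) k = 0. Proof. by []. Qed.
Lemma ps1E k : (1 : ps) k = if k == 0%N then 1 else 0. Proof. by []. Qed.
Lemma psmulE (s u : ps) k : (s * u) k = \sum_(j < k.+1) s j * u (k - j)%N. Proof. by []. Qed.
Lemma pssubE (s u : ps) k : (s - u) k = s k - u k. Proof. by []. Qed.

Lemma ps_sumE I (r : seq I) (P : pred I) (G : I -> ps) k :
  (\sum_(i <- r | P i) G i) k = \sum_(i <- r | P i) G i k.
Proof. by apply: (big_morph (fun s : ps => s k)) => //. Qed.

Lemma ps_prod0 I (r : seq I) (P : pred I) (G : I -> ps) :
  (\prod_(i <- r | P i) G i) 0%N = \prod_(i <- r | P i) G i 0%N.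
Proof.
apply: (big_morph (fun s : ps => s 0%N)) => // x y.
by rewrite psmulE big_ord1 subnn.
Qed.

Definition cst (a : F) : ps := fun k => if k == 0%N then a else 0.

Lemma cstM_l a (s : ps) k : (cst a * s) k = a * s k.
Proof.
rewrite psmulE big_ord_recl /= subn0 /cst /=.
by rewrite big1 ?addr0 // => i _; rewrite mul0r.
Qed.

Lemma cst_nmod : nmod_morphism cst.
Proof.
split; first by apply/funext=> k; rewrite /cst; case: (k == 0%N).
by move=> a b; apply/funext=> k; rewrite psaddE /cst; case: (k == 0%N); rewrite ?addr0.
Qed.
Lemma cst_monoid : monoid_morphism cst.
Proof.
split; first by [].
move=> a b; apply/funext=> k; rewrite cstM_l /cst; case: (k == 0%N); rewrite ?mulr0 //.
Qed.
HB.instance Definition _ := GRing.isNmodMorphism.Build F ps cst cst_nmod.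
HB.instance Definition _ := GRing.isMonoidMorphism.Build F ps cst cst_monoid.

Definition tpow (d : nat) : ps := fun k => if k == d then 1 else 0.

Lemma tpowM_l d (s : ps) k : (tpow d * s) k = if (d <= k)%N then s (k - d)%N else 0.
Proof.
rewrite psmulE /tpow; case: leqP => dk.
  rewrite (bigD1 (Ordinal (dk : (d < k.+1)%N))) //= eqxx mul1r big1 ?addr0 //.
  move=> i /eqP ne; case: eqP => [e|]; last by rewrite mul0r.
  by case: ne; apply: val_inj.
rewrite big1 // => i _; case: eqP => [e|]; last by rewrite mul0r.
by have := ltn_ord i; rewrite e ltnS leqNgt dk.
Qed.

Lemma tpow0 : tpow 0 = 1. Proof. by []. Qed.

Lemma tpowD a b : tpow (a + b) = tpow a * tpow b.
Proof.
apply/funext=> k; rewrite tpowM_l /tpow; case: leqP => ak.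
  have -> : (k - a == b)%N = (k == a + b)%N by rewrite -(eqn_add2l a) subnKC.
  by [].
case: eqP => // e; move: ak; rewrite e ltnNge leq_addr //.
Qed.

Lemma tpowX d e : tpow d ^+ e = tpow (d * e).
Proof.
elim: e => [|e IH]; first by rewrite expr0 muln0.
by rewrite exprS IH -tpowD mulnS.
Qed.

Definition psinv (u : ps) : ps := fun k => nth 0 (invl u k) k.

Lemma size_invl (u : ps) k : size (invl u k) = k.+1.
Proof. by elim: k => [|k IH] //=; rewrite size_rcons IH. Qed.

Lemma nth_invl (u : ps) k j : (j <= k)%N -> nth 0 (invl u k) j = psinv u j.
Proof.
elim: k => [|k IH]; first by rewrite leqn0 => /eqP ->.
rewrite leq_eqVlt => /orP [/eqP -> //| jk].
by rewrite /= nth_rcons size_invl jk IH.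
Qed.

Lemma psinv0 (u : ps) : psinv u 0%N = (u 0%N)^-1. Proof. by []. Qed.

Lemma psinvS (u : ps) k : psinv u k.+1 =
  - (u 0%N)^-1 * \sum_(j < k.+1) u j.+1 * psinv u (k - j)%N.
Proof.
rewrite {1}/psinv /= nth_rcons size_invl ltnn eqxx.
congr (_ * _); apply: eq_bigr => j _; rewrite nth_invl // leq_subr //.
Qed.

Lemma psinvK (u : ps) : u 0%N != 0 -> psinv u * u = 1.
Proof.
move=> u0; rewrite mulrC; apply/funext=> k; rewrite ps1E psmulE.
case: k => [|k]; first by rewrite big_ord1 subnn psinv0 mulfV.
rewrite big_ord_recl /= subn0 psinvS mulrA mulrN mulfV // mulN1r.
rewrite addrC; apply/eqP; rewrite subr_eq0; apply/eqP.
by apply: eq_bigr => j _; rewrite /bump /= add1n subSS.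
Qed.

Lemma card_pow : exists p r, p \in [pchar F] /\ #|F| = (p ^ r)%N.
Proof.
have [p pp ch] := finPcharP F.
have := abelem_pgroup (fin_ring_pchar_abelem ch).
rewrite pgroupE cardsT => /p_natP [r e]; by exists p, r.
Qed.

Lemma pchar_ps p : p \in [pchar F] -> p \in [pchar ps].
Proof.
case/andP=> pp /eqP h; apply/andP; split => //.
by rewrite -(rmorph_nat cst) h rmorph0.
Qed.

Lemma frobD p k (x y : ps) : p \in [pchar F] ->
  (x + y) ^+ (p ^ k) = x ^+ (p ^ k) + y ^+ (p ^ k).
Proof.
move=> /pchar_ps ch; elim: k => [|k IH]; first by rewrite !expn0 !expr1.
by rewrite !expnSr !exprM IH -!(pFrobenius_autE ch) rmorphD.
Qed.
Local Notation q := #|F|.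

Lemma prod_neq (r : seq F) (f : F -> {poly F}) x : x \notin r ->
  \prod_(j <- r | j != x) f j = \prod_(j <- r) f j.
Proof.
move=> xr; rewrite -big_filter; congr bigop; apply/all_filterP/allP => j jr.
by apply/eqP => e; move: xr; rewrite -e jr.
Qed.

Lemma deriv_prod_seq (r : seq F) (f : F -> {poly F}) : uniq r ->
  (\prod_(i <- r) f i)^`() = \sum_(i <- r) (f i)^`() * \prod_(j <- r | j != i) f j.
Proof.
elim: r => [|x r IH]; first by rewrite !big_nil derivC.
rewrite /= => /andP [xr ur].
rewrite !big_cons derivM IH // eqxx prod_neq //; congr (_ + _).
rewrite big_distrr /= !(big_seq) /=; apply: eq_bigr => i ir.
rewrite big_cons; case: eqP => [e|_]; first by move: xr; rewrite e ir.
by rewrite mulrCA.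
Qed.

Lemma q_gt1 : (1 < q)%N. Proof. exact: finNzRing_gt1. Qed.

Lemma natr_q : (q%:R : F) = 0.
Proof.
have [p [r [ch e]]] : exists p r, p \in [pchar F] /\ #|F| = (p ^ r)%N.
  have [p pp ch] := finPcharP F.
  have := abelem_pgroup (fin_ring_pchar_abelem ch).
  rewrite pgroupE cardsT => /p_natP [r e]; by exists p, r.
have r0 : (0 < r)%N.
  case: r e => // e; have := q_gt1; by rewrite e expn0.
by rewrite e natrX (pcharf0 ch) expr0n eqn0Ngt r0.
Qed.

Lemma prod_XsubC_nz : \prod_(c | c != 0) ('X - c%:P) = 'X^(q.-1) - 1 :> {poly F}.
Proof.
have := finField_genPoly F; rewrite (bigD1 0) //= subr0.
have -> : 'X^q - 'X = 'X * ('X^(q.-1) - 1) :> {poly F}.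
  by rewrite mulrBr mulr1 -exprS prednK // ltnW // q_gt1.
by move/mulfI => -> //; rewrite polyX_eq0.
Qed.

Definition lin (c : F) : {poly F} := 1 + c%:P * 'X.

Lemma prod_lin : \prod_c lin c = 1 - 'X^(q.-1).
Proof.
rewrite (bigD1 0) //= /lin mul0r addr0 mul1r.
have E : \prod_(c | c != 0) (1 + c%:P * 'X) =
   (\prod_(c | c != 0) c)%:P * ('X^(q.-1) - 1) :> {poly F}.
  pose g := fun c : F => - c^-1.
  have gi : injective g by move=> a b; rewrite /g => /oppr_inj /invr_inj.
  have R : \prod_(c | c != 0) ('X - c%:P) = \prod_(c | c != 0) ('X - (g c)%:P) :> {poly F}.
    rewrite (reindex_inj gi) /=; apply: eq_bigl => c.
    by rewrite /g oppr_eq0 invr_eq0.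
  rewrite -prod_XsubC_nz R rmorph_prod -big_split /=; apply: eq_bigr => c cn.
  rewrite /g polyCN opprK mulrDr -polyCM mulfV // mulrC.
  by rewrite addrC.
have := congr1 (fun p => p.[0]) E; rewrite horner_prod hornerM hornerC.
rewrite hornerD hornerN hornerXn hornerC expr0n /=.
have -> : (q.-1 == 0%N) = false by rewrite -subn1 subn_eq0 leqNgt q_gt1.
rewrite sub0r mulrN1 => K.
have K1 : \prod_(c | c != 0) c = -1 :> F.
  apply/eqP; rewrite -eqr_oppLR -K; apply/eqP.
  rewrite big1 // => c _; by rewrite hornerD hornerM hornerX mulr0 hornerC addr0.
by rewrite E K1 polyCN mulN1r opprB.
Qed.

Lemma natr_qm1 : (q.-1)%:R = -1 :> F.
Proof.
by apply/eqP; rewrite -addr_eq0 natr1 prednK ?natr_q // ltnW // q_gt1.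
Qed.

Lemma natr_qm1P : (q.-1)%:R = -1 :> {poly F}.
Proof. by rewrite -(rmorph_nat (@polyC F)) natr_qm1 rmorphN1. Qed.

Lemma deriv_lin c : (lin c)^`() = c%:P.
Proof. by rewrite /lin addrC -[1]/(1%:P) derivMXaddC derivC mul0r addr0. Qed.

Lemma Q2 : \sum_c c%:P * \prod_(j | j != c) lin j = 'X^(q.-2).
Proof.
have := congr1 deriv prod_lin; rewrite deriv_prod_seq ?index_enum_uniq //.
move=> H; rewrite [LHS](_ : _ = \sum_(i <- index_enum F) (lin i)^`() * \prod_(j <- index_enum F | j != i) lin j).
  rewrite H derivB derivC derivXn sub0r -mulr_natr natr_qm1P.
  by rewrite mulrN1 opprK.
by apply: eq_bigr => c _; rewrite deriv_lin.
Qed.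

Lemma Q1 : \sum_c \prod_(j | j != c) lin j = - 'X^(q.-1).
Proof.
have H : \sum_c lin c * \prod_(j | j != c) lin j = 0.
  rewrite (eq_bigr (fun _ => \prod_c lin c)); last by move=> c _; rewrite [RHS](bigD1 c).
  rewrite sumr_const -mulr_natr.
  by rewrite -(rmorph_nat (@polyC F)) natr_q mulr0.
move: H; rewrite /lin (eq_bigr (fun c => \prod_(j | j != c) lin j + 'X * (c%:P * \prod_(j | j != c) lin j))); last first.
  by move=> c _; rewrite mulrDl mul1r mulrCA mulrA.
rewrite big_split /= -mulr_sumr Q2 -exprS.
have -> : (q.-2).+1 = q.-1 by case: #|F| q_gt1 => [|[]].
by move/eqP; rewrite addr_eq0 => /eqP.
Qed.



Lemma ps_mul0 (x y : ps) : (x * y) 0%N = x 0%N * y 0%N.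
Proof. by rewrite psmulE big_ord1 subnn. Qed.

Lemma ps_exp0 (x : ps) k : (x ^+ k) 0%N = (x 0%N) ^+ k.
Proof. by elim: k => [|k IH]; rewrite ?expr0 // !exprS ps_mul0 IH. Qed.

Lemma cst0E a k : cst a k = if k == 0%N then a else 0. Proof. by []. Qed.

Lemma tpow_mul0 (x : ps) k : (0 < k)%N -> (x * tpow k) 0%N = 0.
Proof. by move=> k0; rewrite ps_mul0 /tpow eq_sym (negbTE (lt0n_neq0 k0)) mulr0. Qed.

Lemma expf_cardn (c : F) n : c ^+ (q ^ n) = c.
Proof. by elim: n => [|n IH]; rewrite ?expr1 // expnSr exprM IH expf_card. Qed.

Lemma frobQ (x y : ps) n : (x + y) ^+ (q ^ n) = x ^+ (q ^ n) + y ^+ (q ^ n).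
Proof.
have [p [r [ch e]]] := card_pow.
by rewrite e -expnM frobD.
Qed.

Lemma core (zeta : ps) (d n : nat) : zeta 0%N != 0 -> (0 < d)%N -> (0 < n)%N ->
  exists W : ps, W 0%N != 0 /\
   \sum_c (psinv (zeta + cst c * tpow d)) ^+ (q ^ n).-1 =
     tpow (d * (1 + (q - 2) * q ^ n)) * W.
Proof.
move=> z0 d0 n0.
set Q := (q ^ n)%N.
have Qgt1 : (1 < Q)%N by rewrite /Q -{1}(expn0 q) ltn_exp2l ?q_gt1.
pose u c := zeta + cst c * tpow d.
have u0 c : u c 0%N = zeta 0%N by rewrite /u psaddE cstM_l /tpow eq_sym (negbTE (lt0n_neq0 d0)) mulr0 addr0.
have wu c : psinv (u c) * u c = 1 by apply: psinvK; rewrite u0.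
set A := zeta ^+ Q.
have A0 : A 0%N != 0 by rewrite /A ps_exp0 expf_neq0.
set Ai := psinv A.
have AiA : Ai * A = 1 by apply: psinvK.
set beta := Ai * tpow (d * Q).
have cfu : commr_rmorph cst beta by move=> x; exact: mulrC.
pose ev := horner_morph cfu.
have evlin c : ev (lin c) = 1 + cst c * beta.
  by rewrite /ev /lin rmorphD rmorphM /= horner_morphX !(horner_morphC cfu) rmorph1.
have UC c : u c ^+ Q = A * ev (lin c).
  rewrite evlin /u frobQ exprMn tpowX -rmorphXn expf_cardn.
  by rewrite mulrDr mulr1 /beta (mulrCA A) (mulrA A) [A * Ai]mulrC AiA mul1r /A /Q.
have wm c : psinv (u c) ^+ Q.-1 * u c ^+ Q = u c.
  by rewrite -{2}(prednK (ltnW Qgt1)) exprS mulrCA -exprMn wu expr1n mulr1.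
set P := \prod_c ev (lin c).
have key : (\sum_c psinv (u c) ^+ Q.-1) * (A * P) =
   - zeta * beta ^+ (q.-1) + tpow d * beta ^+ (q.-2).
  rewrite mulr_suml.
  rewrite (eq_bigr (fun c => zeta * ev (\prod_(j | j != c) lin j) + tpow d * (cst c * ev (\prod_(j | j != c) lin j)))); last first.
    move=> c _; rewrite /P (bigD1 c) //= mulrA -!mulrA (mulrA A) -UC mulrA wm /ev -rmorph_prod /=.
    by rewrite /u mulrDl mulrA [tpow d * _]mulrC.
  rewrite big_split /= -!mulr_sumr.
  rewrite /ev -rmorph_sum Q1 rmorphN rmorphXn /= horner_morphX mulrN mulNr; congr (_ + _).
  have hb : beta ^+ (q.-2) = horner_morph cfu ('X^(q.-2)) by rewrite rmorphXn /= horner_morphX.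
  congr (_ * _); rewrite hb -Q2 rmorph_sum.
  by apply: eq_bigr => c _; rewrite rmorphM /= horner_morphC.
have qg : (1 < q)%N := q_gt1.
have hb1 : beta ^+ q.-1 = Ai ^+ q.-1 * tpow (d * Q * q.-1) by rewrite exprMn tpowX.
have hb2 : beta ^+ q.-2 = Ai ^+ q.-2 * tpow (d * Q * q.-2) by rewrite exprMn tpowX.
set e := (d * (1 + (q - 2) * Q))%N.
have E1 : (d * Q * q.-1)%N = (e + d * Q.-1)%N.
  rewrite /e; move: Qgt1 qg; clear; move=> H1 H2; nia.
have E2 : (d + d * Q * q.-2)%N = e.
  rewrite /e; move: Qgt1 qg; clear; move=> H1 H2; nia.
set V := Ai ^+ q.-2 - zeta * Ai ^+ q.-1 * tpow (d * Q.-1).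
have key2 : (\sum_c psinv (u c) ^+ Q.-1) * (A * P) = tpow e * V.
  rewrite key hb1 hb2 E1 tpowD /V mulrBr addrC; congr (_ + _).
    by rewrite mulrCA -tpowD E2 mulrC.
  ring.
have b0 : beta 0%N = 0 by rewrite /beta tpow_mul0 // muln_gt0 d0 ltnW.
have P0 : P 0%N = 1.
  rewrite /P ps_prod0 big1 // => c _; rewrite evlin psaddE cstM_l b0 mulr0 addr0 //.
have AP0 : (A * P) 0%N != 0 by rewrite ps_mul0 P0 mulr1.
set G := psinv (A * P).
have GAP : G * (A * P) = 1 by apply: psinvK.
exists (V * G); split.
  rewrite ps_mul0 mulf_neq0 //; last by rewrite /G psinv0 invr_eq0.
  rewrite /V pssubE tpow_mul0 ?subr0; last by rewrite muln_gt0 d0 -subn1 subn_gt0.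
  by rewrite ps_exp0 expf_neq0 // /Ai psinv0 invr_eq0.
have -> : \sum_c psinv (zeta + cst c * tpow d) ^+ Q.-1 = \sum_c psinv (u c) ^+ Q.-1 by [].
have GAP' : (A * P) * G = 1 by rewrite mulrC.
by rewrite -[LHS]mulr1 -GAP' mulrA key2 -mulrA.
Qed.

Implicit Types (x y : LS F).

Lemma coefE x n : coef x n = if x.1 <= n then x.2 (absz (n - x.1)) else 0.
Proof.
rewrite /coef; case E: (n - x.1) => [k|k].
  have -> : x.1 <= n by rewrite -subr_ge0 E.
  by [].
have -> : (x.1 <= n) = false by apply/negbTE; rewrite -ltNge -subr_lt0 E.
by [].
Qed.

Lemma coef_addLS x y n : coef (addLS x y) n = coef x n + coef y n.
Proof.
rewrite [LHS]coefE /addLS /=; set v := Num.min x.1 y.1.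
case: ifP => vn.
  by rewrite gez0_abs ?subr_ge0 // addrCA subrr addr0.
have /norP [nx ny] : ~~ ((x.1 <= n) || (y.1 <= n)) by rewrite -ge_min vn.
by rewrite !coefE (negbTE nx) (negbTE ny) addr0.
Qed.

Lemma coef_zeroLS n : coef (zeroLS F) n = 0.
Proof. by rewrite coefE /=; case: ifP => // _; case: eqP. Qed.

Lemma coef_bigLS I (r : seq I) (P : pred I) (G : I -> LS F) n :
  coef (\big[@addLS F/zeroLS F]_(i <- r | P i) G i) n = \sum_(i <- r | P i) coef (G i) n.
Proof.
apply: (big_morph (fun x => coef x n)); first by move=> ? ?; exact: coef_addLS.
exact: coef_zeroLS.
Qed.

Lemma coef_mulconst c x n : coef (mulLS (constLS c) x) n = c * coef x n.
Proof.
rewrite !coefE /mulLS /= add0r; case: ifP => _; last by rewrite mulr0.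
by have := cstM_l c x.2 (absz (n - x.1)).
Qed.

Lemma coef_one n : coef (oneLS F) n = if n == 0 then 1 else 0.
Proof.
rewrite coefE /= subr0; case: (ltrgtP 0 n) => [n0|n0|<-] //=.
  by rewrite gt_eqF //; case: n n0 => // k; case: k.
Qed.

Definition nzLS x := exists k, x.2 k != 0.

Lemma k0_eq x (h : nzLS x) N : (forall n, n < N -> coef x n = 0) -> coef x N != 0 ->
  x.1 + (ex_minn h)%:Z = N.
Proof.
move=> low cN; case: ex_minnP => k0 xk0 mink.
have c1 : coef x (x.1 + k0%:Z) = x.2 k0 by rewrite coefE lerDl addrC addKr.
have NgeX : x.1 <= N by move: cN; rewrite coefE; case: ifP => // _; rewrite eqxx.
apply/eqP; rewrite eq_le; apply/andP; split.
  have : x.2 (absz (N - x.1)) != 0 by move: cN; rewrite coefE NgeX.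
  move/mink => h1.
  have H2 : k0%:Z <= N - x.1 by rewrite -[N - x.1]gez0_abs ?subr_ge0 // lez_nat.
  move: H2; clear; lia.
rewrite leNgt; apply/negP => /low; rewrite c1; exact/eqP.
Qed.

Lemma nzLS_of x N : coef x N != 0 -> nzLS x.
Proof.
rewrite coefE; case: ifP => _; last by rewrite eqxx.
by move=> h; exists (absz (N - x.1)).
Qed.

Lemma invLS_eq x v : (forall n, n < v -> coef x n = 0) -> coef x v != 0 ->
  invLS x = (- v, psinv (fun j => coef x (v + j%:Z))).
Proof.
move=> low cv; rewrite /invLS; case: excluded_middle_informative => [h|h]; last first.
  by case: h; exact: nzLS_of cv.
have e := k0_eq h low cv.
rewrite e; congr (_, psinv _); apply/funext => j.
rewrite coefE -e -addrA lerDl.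
have -> : x.1 + ((ex_minn h)%:Z + j%:Z) - x.1 = (ex_minn h + j)%N%:Z by rewrite addrC addKr.
by [].
Qed.

Lemma absLS_eq x v : (forall n, n < v -> coef x n = 0) -> coef x v != 0 ->
  absLS x = (qF F)%:Q ^ (- v).
Proof.
move=> low cv; rewrite /absLS; case: excluded_middle_informative => [h|h]; last first.
  by case: h; exact: nzLS_of cv.
by rewrite (k0_eq h low cv).
Qed.

Definition valLS x : int :=
  match excluded_middle_informative (nzLS x) with
  | left h => x.1 + (ex_minn h)%:Z
  | right _ => 0 end.

Lemma valLS_spec x : absLS x != 0 ->
  [/\ (forall n, n < valLS x -> coef x n = 0), coef x (valLS x) != 0 &
      absLS x = (qF F)%:Q ^ (- valLS x)].
Proof.
rewrite /absLS /valLS; case: excluded_middle_informative => [h|h]; last by rewrite eqxx.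
move=> _; case: ex_minnP => k0 xk0 mink; split => //.
  move=> n ltn; rewrite coefE; case: ifP => // le1.
  apply/eqP; apply: contraTT ltn => /mink h2; rewrite -leNgt.
  have H2 : k0%:Z <= n - x.1 by rewrite -[n - x.1]gez0_abs ?subr_ge0 // lez_nat.
  move: H2; clear; lia.
by rewrite coefE lerDl addrC addKr.
Qed.

Lemma powLS_pair (v : int) (s : ps) m : powLS (v, s) m = (m%:Z * v, s ^+ m).
Proof.
elim: m => [|m IH]; first by rewrite mul0r expr0.
rewrite /powLS /= -/(powLS (v, s) m) IH /mulLS /=.
by rewrite exprS intS mulrDl mul1r.
Qed.

Lemma coef_pair (v : int) (s : ps) n : coef (v, s) n = if v <= n then s (absz (n - v)) else 0.
Proof. by rewrite coefE. Qed.

Lemma lemG (d n : nat) (zc : int -> F) (y : F -> LS F) :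
  (0 < d)%N -> (0 < n)%N -> (forall k, k < - d%:Z -> zc k = 0) -> zc (- d%:Z) != 0 ->
  (forall a k, coef (y a) k = zc k + (if k == 0 then a else 0)) ->
  (forall k, k < (d * q ^ n * q.-1)%N%:Z ->
     \sum_a coef (powLS (invLS (y a)) (q ^ n).-1) k = 0) /\
  \sum_a coef (powLS (invLS (y a)) (q ^ n).-1) (d * q ^ n * q.-1)%N%:Z != 0.
Proof.
move=> d0 n0 zlow znz yE.
set Q := (q ^ n)%N.
have Qgt1 : (1 < Q)%N by rewrite /Q -{1}(expn0 q) ltn_exp2l ?q_gt1.
have qg : (1 < q)%N := q_gt1.
pose zeta : ps := fun j => zc (- d%:Z + j%:Z).
have dnz : (- d%:Z == 0) = false by rewrite oppr_eq0 eqz_nat; case: (d) d0.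
have inv a : invLS (y a) = (d%:Z, psinv (zeta + cst a * tpow d)).
  rewrite (@invLS_eq _ (- d%:Z)).
  - rewrite opprK; congr (_, psinv _); apply/funext => j.
    rewrite yE psaddE cstM_l /tpow /zeta; congr (_ + _).
    have -> : (- d%:Z + j%:Z == 0) = (j == d) by rewrite addrC subr_eq0 eqz_nat.
    by case: eqP; rewrite ?mulr1 ?mulr0.
  - move=> k kd; rewrite yE zlow //.
    have -> : (k == 0) = false by apply/negbTE; rewrite lt_eqF // (lt_trans kd) // oppr_lt0 ltz_nat.
    by rewrite addr0.
  - by rewrite yE dnz addr0.
have z0 : zeta 0%N != 0 by rewrite /zeta addr0.
have [W [W0 sig]] := core z0 d0 n0.
set m := Q.-1.
set e := (d * (1 + (q - 2) * Q))%N.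
have Ee : (m * d + e)%N = (d * Q * q.-1)%N.
  rewrite /m /e; move: Qgt1 qg; clear; move=> H1 H2; nia.
have S k : \sum_a coef (powLS (invLS (y a)) m) k =
    if (m * d)%N%:Z <= k then (tpow e * W) (absz (k - (m * d)%N%:Z)) else 0.
  rewrite -sig; under eq_bigr => a _ do rewrite inv powLS_pair coef_pair.
  rewrite -PoszM mulnC; case: ifP => _; last by rewrite big1.
  by rewrite ps_sumE.
split.
  move=> k kN; rewrite S; case: ifP => // mk; rewrite tpowM_l.
  case: ifP => // ek; exfalso; move: ek kN mk; rewrite -Ee; clear.
  move=> ek kN mk.
  have H : (e%:Z <= k - (m * d)%N%:Z) by rewrite -[k - _]gez0_abs ?subr_ge0 // lez_nat.
  move: H kN; lia.
by rewrite S -Ee PoszD lerDl /= addrAC subrr add0r /= tpowM_l leqnn subnn.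
Qed.

Definition ext i (a : F) (c : {ffun 'I_i -> F}) : {ffun 'I_i.+1 -> F} :=
  [ffun j => if unlift ord0 j is Some j' then c j' else a].

Lemma ext0 i a c : @ext i a c ord0 = a.
Proof. by rewrite ffunE unlift_none. Qed.

Lemma extS i a c (j : 'I_i) : @ext i a c (lift ord0 j) = c j.
Proof. by rewrite ffunE liftK. Qed.

Lemma sum_ffunS i (G : {ffun 'I_i.+1 -> F} -> F) :
  \sum_c G c = \sum_(c : {ffun 'I_i -> F}) \sum_a G (ext a c).
Proof.
pose h := fun p : F * {ffun 'I_i -> F} => ext p.1 p.2.
pose hi := fun c : {ffun 'I_i.+1 -> F} => (c ord0, [ffun j => c (lift ord0 j)]).
have hb : bijective h.
  exists hi.
    move=> [a c]; rewrite /h /hi /= ext0; congr (_, _).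
    by apply/ffunP => j; rewrite ffunE extS.
  move=> c; apply/ffunP => j; rewrite /h /hi /= ffunE.
  by case: unliftP => [j' ->|->]; rewrite ?ffunE.
rewrite (reindex h (onW_bij _ hb)) /=.
rewrite exchange_big /= pair_big /=.
by apply: eq_bigr => -[a c].
Qed.

Lemma coef_lincomb n (c : {ffun 'I_n -> F}) (alpha : nat -> LS F) k :
  coef (lincomb c alpha) k = \sum_(j < n) c j * coef (alpha j) k.
Proof.
rewrite /lincomb coef_bigLS; apply: eq_bigr => j _; exact: coef_mulconst.
Qed.

Section Main.
Variables (alpha : nat -> LS F) (n : nat).
Hypotheses (H0 : eqLS (alpha 0%N) (oneLS F)) (H1 : 1 < absLS (alpha 1%N))
  (Hinc : forall i, (0 < i)%N -> absLS (alpha i) < absLS (alpha i.+1)) (n0 : (0 < n)%N).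

Local Notation Q := (q ^ n)%N.
Local Notation m := (q ^ n).-1.

Lemma qQ_gt1 : 1 < (qF F)%:Q.
Proof. by rewrite /qF ltr1n q_gt1. Qed.

Lemma abs_gt1 i : (0 < i)%N -> 1 < absLS (alpha i).
Proof.
elim: i => // i IH _; case: i IH => [|i] IH //.
by apply: lt_trans (IH isT) (Hinc _).
Qed.

Definition D i := - valLS (alpha i).

Lemma Dspec i : (0 < i)%N ->
  [/\ (forall k, k < - D i -> coef (alpha i) k = 0), coef (alpha i) (- D i) != 0 &
      absLS (alpha i) = (qF F)%:Q ^ D i].
Proof.
move=> i0; have /valLS_spec [a b c] : absLS (alpha i) != 0.
  by rewrite gt_eqF // (lt_trans _ (abs_gt1 i0)).
by rewrite /D opprK; split.
Qed.

Lemma D_gt0 i : (0 < i)%N -> 0 < D i.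
Proof.
move=> i0; have [_ _ e] := Dspec i0; have := abs_gt1 i0.
by rewrite e -(expr0z ((qF F)%:Q)) (ltr_eXz2l qQ_gt1).
Qed.

Lemma D_lt i : (0 < i)%N -> D i < D i.+1.
Proof.
move=> i0; have [_ _ e] := Dspec i0; have [_ _ e'] := Dspec (ltn0Sn i).
by have := Hinc i0; rewrite e e' (ltr_eXz2l qQ_gt1).
Qed.

Lemma D_mono j i : (0 < j)%N -> (j < i)%N -> D j < D i.
Proof.
move=> j0; elim: i => // i IH; rewrite ltnS leq_eqVlt => /orP [/eqP <-|ji].
  exact: D_lt.
by apply: lt_trans (IH ji) (D_lt _); apply: leq_trans ji.
Qed.

Lemma D_ge i : (0 < i)%N -> i%:Z <= D i.
Proof.
elim: i => // i IH _; case: i IH => [|i] IH; first by have := D_gt0 (ltn0Sn 0).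
have := D_lt (ltn0Sn i); have := IH isT; rewrite !intS; lia.
Qed.

Definition Nn i : int := D i * (Q%:Z * (q%:Z - 1)).

Lemma Nn_nat i : (0 < i)%N -> ((absz (D i)) * Q * q.-1)%N%:Z = Nn i.
Proof.
move=> i0; rewrite /Nn !PoszM gez0_abs ?(ltW (D_gt0 i0)) // predn_int ?mulrA //.
by rewrite ltnW // q_gt1.
Qed.

Lemma Om_coef i k : coef (Omega alpha i.+1 m) k =
  \sum_(c : {ffun 'I_i -> F}) \sum_a
     coef (powLS (invLS (addLS (lincomb (ext a c) alpha) (alpha i.+1))) m) k.
Proof. by rewrite /Omega coef_bigLS sum_ffunS. Qed.

Lemma inner i (c : {ffun 'I_i -> F}) :
  (forall k, k < Nn i.+1 -> \sum_a
     coef (powLS (invLS (addLS (lincomb (ext a c) alpha) (alpha i.+1))) m) k = 0) /\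
  \sum_a coef (powLS (invLS (addLS (lincomb (ext a c) alpha) (alpha i.+1))) m) (Nn i.+1) != 0.
Proof.
have i0 : (0 < i.+1)%N by [].
pose d := absz (D i.+1).
have dE : d%:Z = D i.+1 by rewrite gez0_abs // ltW // D_gt0.
have d0 : (0 < d)%N by rewrite -ltz_nat dE D_gt0.
pose zc := fun k => \sum_(j < i) c j * coef (alpha j.+1) k + coef (alpha i.+1) k.
have [lowi nzi _] := Dspec i0.
have lowj k j : k <= - D i.+1 -> (j < i)%N -> coef (alpha j.+1) k = 0.
  move=> kD ji; have [lowj _ _] := Dspec (ltn0Sn j); apply: lowj.
  by apply: le_lt_trans kD _; rewrite ltrN2 D_mono.
have := @lemG d n zc (fun a => addLS (lincomb (ext a c) alpha) (alpha i.+1)) d0 n0.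
rewrite Nn_nat // dE; apply.
- move=> k kd; rewrite /zc lowi // addr0 big1 // => j _.
  by rewrite lowj ?mulr0 // ltW.
- rewrite /zc big1 ?add0r // => j _; by rewrite lowj ?mulr0.
- move=> a k; rewrite coef_addLS coef_lincomb big_ord_recl ext0 H0 coef_one.
  rewrite /zc; under eq_bigr => j _ do rewrite extS.
  have -> : \sum_j c j * coef (alpha (lift ord0 j)) k = \sum_(j < i) c j * coef (alpha j.+1) k by [].
  case: (k == 0); rewrite ?mulr1 ?mulr0 ?add0r ?addr0 //.
  by rewrite -addrA addrC.
Qed.

Lemma Om_low i k : (0 < i)%N -> k < Nn i -> coef (Omega alpha i m) k = 0.
Proof.
case: i => // i _ kN; rewrite Om_coef big1 // => c _.
by have [h _] := inner c; apply: h.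
Qed.

Lemma Om1_nz : coef (Omega alpha 1 m) (Nn 1) != 0.
Proof.
rewrite Om_coef; set c0 : {ffun 'I_0 -> F} := [ffun j => 0].
rewrite (eq_bigl (pred1 c0)) ?big_pred1_eq; first by have [_ h] := inner c0.
by move=> c; apply/esym/eqP/ffunP => -[].
Qed.

Lemma K1 : 1 <= Q%:Z * (q%:Z - 1).
Proof.
have qg := q_gt1; have Q1 : (1 <= Q)%N by rewrite expn_gt0 ltnW.
have h2 : 1 < q%:Z by rewrite ltz_nat.
move: Q1; rewrite -lez_nat => h1; move: h1 h2; clear; nia.
Qed.

Lemma Nn_ge i : (0 < i)%N -> i%:Z <= Nn i.
Proof.
move=> i0; have := D_ge i0; have := K1; rewrite /Nn => h1 h2; nia.
Qed.

Lemma Nn_lt i : (1 < i)%N -> Nn 1 < Nn i.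
Proof.
move=> i1; rewrite /Nn ltr_pM2r ?D_mono //.
by apply: lt_le_trans K1.
Qed.

Lemma Om_small i k : (0 < i)%N -> k < i%:Z -> coef (Omega alpha i m) k = 0.
Proof. by move=> i0 ki; apply: Om_low => //; apply: lt_le_trans ki (Nn_ge i0). Qed.

Definition gk k := \sum_(1 <= i < (absz k).+1) coef (Omega alpha i m) k.

Lemma stable k B : ((absz k).+1 <= B)%N ->
  \sum_(1 <= i < B) coef (Omega alpha i m) k = gk k.
Proof.
move=> hB; rewrite (big_cat_nat _ (n := (absz k).+1)) //= [X in _ + X]big1_seq ?addr0 //.
move=> i /andP [_]; rewrite mem_index_iota => /andP [hi _].
apply: Om_small; first by apply: leq_trans hi.
move: hi; rewrite -ltz_nat; clear; lia.
Qed.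

Lemma gk_low k : k < 1 -> gk k = 0.
Proof.
move=> k1; rewrite /gk big1_seq // => i /andP [_]; rewrite mem_index_iota => /andP [hi _].
by apply: Om_small => //; apply: lt_le_trans k1 _; rewrite lez_nat.
Qed.

Definition zlim : LS F := (1, fun j => gk (1 + j%:Z)).

Lemma coef_zlim k : coef zlim k = gk k.
Proof.
rewrite coef_pair; case: lerP => hk; last by rewrite gk_low.
by rewrite gez0_abs ?subr_ge0 // addrCA subrr addr0.
Qed.

Lemma conv : series_to (fun i => Omega alpha i m) zlim.
Proof.
move=> e; exists (absz e) => M hM k ke.
rewrite coef_bigLS coef_zlim; case: (lerP 1 k) => hk.
  apply: stable; rewrite ltnS; apply: leq_trans hM.
  move: hk ke; clear; lia.
rewrite gk_low // big1_seq // => i /andP [_]; rewrite mem_index_iota => /andP [hi _].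
by apply: Om_small => //; apply: lt_le_trans hk _; rewrite lez_nat.
Qed.

Lemma Om1_abs : absLS (Omega alpha 1 m) = (qF F)%:Q ^ (- Nn 1).
Proof. by apply: absLS_eq; [move=> k h; apply: Om_low | exact: Om1_nz]. Qed.

Lemma lim_abs z : series_to (fun i => Omega alpha i m) z ->
  absLS z = absLS (Omega alpha 1 m).
Proof.
move=> /(_ (Nn 1)) [N0 HN].
have ez k : k <= Nn 1 -> coef z k = coef (Omega alpha 1 m) k.
  move=> kN; rewrite -(HN (maxn N0 1)) ?leq_maxl // coef_bigLS.
  rewrite big_ltn ?ltnS ?leq_maxr // big1_seq ?addr0 // => i /andP [_].
  rewrite mem_index_iota => /andP [hi _]; apply: Om_low; first exact: ltnW.
  by apply: le_lt_trans kN (Nn_lt hi).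
have low k : k < Nn 1 -> coef (Omega alpha 1 m) k = 0 by move=> h; apply: Om_low.
rewrite Om1_abs; apply: absLS_eq.
  by move=> k kN; rewrite ez ?low // ltW.
by rewrite ez // Om1_nz.
Qed.

Lemma main_res :
  (exists z, series_to (fun i => Omega alpha i m) z) /\
  (forall z, series_to (fun i => Omega alpha i m) z ->
     [/\ absLS z = absLS (Omega alpha 1 m),
         absLS (Omega alpha 1 m) =
           absLS (alpha 1%N) ^ ((qF F ^ n)%:Z * (1 - (qF F)%:Z)) &
         absLS (Omega alpha 1 m) < 1]).
Proof.
split; first by exists zlim; exact: conv.
move=> z hz; split; first exact: lim_abs.
  have [_ _ e] := Dspec (ltn0Sn 0).
  rewrite Om1_abs e exprz_exp /Nn /qF; congr (_ ^ _).
  by rewrite -!mulrN opprB.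
rewrite Om1_abs -(expr0z ((qF F)%:Q)) (ltr_eXz2l qQ_gt1) oppr_lt0.
by apply: lt_le_trans (Nn_ge (ltn0Sn 0)).
Qed.
End Main.
End PS.

Theorem corollary1 (F : finFieldType) (a : {poly F}) (b : F) (f : LS F)
  (I : LS F -> Prop) (alpha : nat -> LS F) (n : nat) :
  a \is monic -> (1 < size a)%N -> b != 0 ->
  eqLS (mulLS f f) (addLS (mulLS (polyLS a) f) (constLS b)) ->
  ~ in_k f ->
  absLS f = (qF F)%:Q ^+ (size a).-1 ->
  frac_ideal (size a).-1 f I ->
  Fq_basis I alpha ->
  eqLS (alpha 0%N) (oneLS F) ->
  1 < absLS (alpha 1%N) ->
  (forall i, (0 < i)%N -> absLS (alpha i) < absLS (alpha i.+1)) ->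
  (1 <= n)%N ->
  let m := (qF F ^ n).-1 in
  (exists z, series_to (fun i => Omega alpha i m) z) /\
  (forall z, series_to (fun i => Omega alpha i m) z ->
     [/\ absLS z = absLS (Omega alpha 1 m),
         absLS (Omega alpha 1 m) =
           absLS (alpha 1%N) ^ ((qF F ^ n)%:Z * (1 - (qF F)%:Z)) &
         absLS (Omega alpha 1 m) < 1]).
Proof.
move=> _ _ _ _ _ _ _ _ H9 H10 H11 hn.
exact: (main_res H9 H10 H11 hn).
Qed.
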